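(* Let $X=([0,2]_{\mathbb{Z}}\times[0,2]_{\mathbb{Z}})\cup([2,4]_{\mathbb{Z}}\times[0,3]_{\mathbb{Z}})\subset\mathbb{Z}^2$. Then $$A'=\{(0,0),(4,0),(4,3),(2,3),(0,2)\}$$ is a minimal freezing set for $(X,c_1)$.
   Context: $[a,b]_{\mathbb{Z}}=\{k\in\mathbb{Z}: a\le k\le b\}$. For $x\neq y$ in $\mathbb{Z}^2$, $x,y$ are $c_1$-adjacent if they differ by 1 in exactly one coordinate and agree in the other. $f:X\to X$ is $c_1$-continuous ($f\in C(X,c_1)$) if whenever $x,x'$ are $c_1$-adjacent, $f(x)$ and $f(x')$ are equal or $c_1$-adjacent. $\mathrm{Fix}(f)=\{x:f(x)=x\}$. $A\subset X$ is a freezing set for $(X,c_1)$ if every $f\in C(X,c_1)$ with $A\subset\mathrm{Fix}(f)$ is the identity on $X$; it is minimal if no proper subset of $A$ is a freezing set. *)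

(* Defs.v *)
From Stdlib Require Import ZArith.
Open Scope Z_scope.

Definition pt := (Z * Z)%type.

Definition c1_adj (x y : pt) : Prop :=
  (fst x = fst y /\ Z.abs (snd x - snd y) = 1) \/
  (snd x = snd y /\ Z.abs (fst x - fst y) = 1).

(* A self-map of X: a function defined on Z^2 which maps X into X;
   only its values on X matter. *)
Definition maps_into (X : pt -> Prop) (f : pt -> pt) : Prop :=
  forall x, X x -> X (f x).

Definition c1_continuous (X : pt -> Prop) (f : pt -> pt) : Prop :=
  maps_into X f /\
  forall x x', X x -> X x' -> c1_adj x x' -> f x = f x' \/ c1_adj (f x) (f x').

Definition freezing_set (X A : pt -> Prop) : Prop :=
  (forall a, A a -> X a) /\
  forall f, c1_continuous X f -> (forall a, A a -> f a = a) ->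
    forall x, X x -> f x = x.

Definition minimal_freezing_set (X A : pt -> Prop) : Prop :=
  freezing_set X A /\
  forall B : pt -> Prop, (forall b, B b -> A b) -> (exists a, A a /\ ~ B a) ->
    ~ freezing_set X B.

Definition Xex (p : pt) : Prop :=
  (0 <= fst p <= 2 /\ 0 <= snd p <= 2) \/ (2 <= fst p <= 4 /\ 0 <= snd p <= 3).

Definition Aex (p : pt) : Prop :=
  p = (0,0) \/ p = (4,0) \/ p = (4,3) \/ p = (2,3) \/ p = (0,2).

(* Main.v *)
Require Import Defs.
From Stdlib Require Import ZArith Lia Bool.
Open Scope Z_scope.

Definition D (p q : pt) : Z := Z.abs (fst p - fst q) + Z.abs (snd p - snd q).

Lemma cont_D f x y : c1_continuous Xex f -> Xex x -> Xex y -> c1_adj x y -> D (f x) (f y) <= 1.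
Proof.
  intros [_ Hc] Hx Hy Ha. destruct (Hc x y Hx Hy Ha) as [E|E].
  - rewrite E. unfold D. lia.
  - unfold D, c1_adj in *. lia.
Qed.

Lemma line_bot (p1 p2 p3 : pt) : D (0,0) p1 <= 1 -> D p1 p2 <= 1 -> D p2 p3 <= 1 -> D p3 (4,0) <= 1 ->
  p1 = (1,0) /\ p2 = (2,0) /\ p3 = (3,0).
Proof.
  destruct p1 as [a1 b1], p2 as [a2 b2], p3 as [a3 b3]; unfold D; simpl; intros.
  assert (a1 = 1 /\ b1 = 0 /\ a2 = 2 /\ b2 = 0 /\ a3 = 3 /\ b3 = 0) by lia.
  intuition subst; reflexivity.
Qed.

Lemma line_right (p1 p2 : pt) : D (4,0) p1 <= 1 -> D p1 p2 <= 1 -> D p2 (4,3) <= 1 ->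
  p1 = (4,1) /\ p2 = (4,2).
Proof.
  destruct p1 as [a1 b1], p2 as [a2 b2]; unfold D; simpl; intros.
  assert (a1 = 4 /\ b1 = 1 /\ a2 = 4 /\ b2 = 2) by lia.
  intuition subst; reflexivity.
Qed.

Lemma mid (a b c p : pt) : D a c = 1 -> D c b = 1 -> D a b = 2 ->
  (fst a = fst b \/ snd a = snd b) -> D a p <= 1 -> D p b <= 1 -> p = c.
Proof.
  destruct a as [a1 a2], b as [b1 b2], c as [c1 c2], p as [p1 p2]; unfold D; simpl; intros.
  assert (p1 = c1 /\ p2 = c2) by lia. intuition subst; reflexivity.
Qed.

Lemma top_left (p1 p2 : pt) : Xex p1 -> Xex p2 -> D (0,2) p1 <= 1 -> D p1 p2 <= 1 -> D p2 (2,3) <= 1 ->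
  p1 = (1,2) /\ p2 = (2,2).
Proof.
  destruct p1 as [a1 b1], p2 as [a2 b2]; unfold D, Xex; simpl; intros.
  assert (a1 = 1 /\ b1 = 2 /\ a2 = 2 /\ b2 = 2) by lia.
  intuition subst; reflexivity.
Qed.

Definition bump (a c : pt) (p : pt) : pt :=
  if (fst p =? fst a) && (snd p =? snd a) then c else p.

Lemma c1_adj_sym x y : c1_adj x y -> c1_adj y x.
Proof. unfold c1_adj; lia. Qed.

Lemma bump_cont (a c : pt) : Xex c -> (forall y, Xex y -> c1_adj a y -> c1_adj c y) ->
  c1_continuous Xex (bump a c).
Proof.
  intros Hc Hn. split.
  - intros x Hx. unfold bump. destruct (_ && _); auto.
  - intros x x' Hx Hx' Ha. unfold bump.
    destruct ((fst x =? fst a) && (snd x =? snd a)) eqn:E1;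
    destruct ((fst x' =? fst a) && (snd x' =? snd a)) eqn:E2;
    right.
    + exfalso. rewrite andb_true_iff, !Z.eqb_eq in E1, E2. destruct x, x', a; simpl in *. unfold c1_adj in Ha; simpl in Ha; lia.
    + apply Hn; auto. rewrite andb_true_iff, !Z.eqb_eq in E1. destruct x, a; simpl in *. destruct E1 as [e1 e2]; rewrite <- e1, <- e2; auto.
    + apply c1_adj_sym, Hn; auto. rewrite andb_true_iff, !Z.eqb_eq in E2. destruct x', a; simpl in *. destruct E2 as [e1 e2]; rewrite <- e1, <- e2; auto.
      apply c1_adj_sym; auto.
    + auto.
Qed.

Lemma bump_other a c b : b <> a -> bump a c b = b.
Proof.
  intros H. unfold bump. destruct ((fst b =? fst a) && (snd b =? snd a)) eqn:E; auto.
  rewrite andb_true_iff, !Z.eqb_eq in E. destruct a, b; simpl in *. destruct E; subst; congruence.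
Qed.

Lemma bump_self a c : bump a c a = c.
Proof. unfold bump. rewrite !Z.eqb_refl. reflexivity. Qed.

Lemma not_freezing (B : pt -> Prop) a c : (forall b, B b -> Aex b) -> ~ B a -> Xex a -> Xex c -> c <> a ->
  (forall y, Xex y -> c1_adj a y -> c1_adj c y) -> ~ freezing_set Xex B.
Proof.
  intros HB Hna Xa Xc Hca Hn [_ HF].
  apply Hca. rewrite <- (bump_self a c). apply (HF _ (bump_cont a c Xc Hn)); auto.
  intros b Hb. apply bump_other. intro; subst; contradiction.
Qed.

Ltac xx := unfold Xex; simpl; lia.
Ltac cd := apply cont_D; [assumption | xx | xx | unfold c1_adj; simpl; lia].

Theorem mainTheorem3 : minimal_freezing_set Xex Aex.
Proof.
  split.
  - split.
    + intros a Ha; unfold Aex in Ha; intuition subst; xx.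
    + intros f Hf HA.
      assert (F00 : f (0,0) = (0,0)) by (apply HA; unfold Aex; tauto).
      assert (F40 : f (4,0) = (4,0)) by (apply HA; unfold Aex; tauto).
      assert (F43 : f (4,3) = (4,3)) by (apply HA; unfold Aex; tauto).
      assert (F23 : f (2,3) = (2,3)) by (apply HA; unfold Aex; tauto).
      assert (F02 : f (0,2) = (0,2)) by (apply HA; unfold Aex; tauto).
      destruct (line_bot (f (1,0)) (f (2,0)) (f (3,0))) as [F10 [F20 F30]].
      { rewrite <- F00 at 1; cd. } { cd. } { cd. } { rewrite <- F40; cd. }
      destruct (line_right (f (4,1)) (f (4,2))) as [F41 F42].
      { rewrite <- F40 at 1; cd. } { cd. } { rewrite <- F43; cd. }
      assert (F01 : f (0,1) = (0,1)).
      { apply (mid (0,0) (0,2)); try (unfold D; simpl; lia).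
        rewrite <- F00 at 1; cd. rewrite <- F02; cd. }
      assert (F33 : f (3,3) = (3,3)).
      { apply (mid (2,3) (4,3)); try (unfold D; simpl; lia).
        rewrite <- F23 at 1; cd. rewrite <- F43; cd. }
      destruct (top_left (f (1,2)) (f (2,2))) as [F12 F22].
      { apply Hf; xx. } { apply Hf; xx. }
      { rewrite <- F02 at 1; cd. } { cd. } { rewrite <- F23; cd. }
      assert (F11 : f (1,1) = (1,1)).
      { apply (mid (1,0) (1,2)); try (unfold D; simpl; lia).
        rewrite <- F10 at 1; cd. rewrite <- F12; cd. }
      assert (F21 : f (2,1) = (2,1)).
      { apply (mid (2,0) (2,2)); try (unfold D; simpl; lia).
        rewrite <- F20 at 1; cd. rewrite <- F22; cd. }
      assert (F31 : f (3,1) = (3,1)).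
      { apply (mid (2,1) (4,1)); try (unfold D; simpl; lia).
        rewrite <- F21 at 1; cd. rewrite <- F41; cd. }
      assert (F32 : f (3,2) = (3,2)).
      { apply (mid (2,2) (4,2)); try (unfold D; simpl; lia).
        rewrite <- F22 at 1; cd. rewrite <- F42; cd. }
      intros [i j] H. unfold Xex in H; simpl in H.
      assert (i = 0 \/ i = 1 \/ i = 2 \/ i = 3 \/ i = 4) as Hi by lia.
      assert (j = 0 \/ j = 1 \/ j = 2 \/ j = 3) as Hj by lia.
      destruct Hi as [->|[->|[->|[->| ->]]]]; destruct Hj as [->|[->|[->| ->]]];
        first [assumption | exfalso; lia].
  - intros B HB [a [Ha Hna]].
    unfold Aex in Ha. destruct Ha as [->|[->|[->|[->| ->]]]].
    + apply (not_freezing B (0,0) (1,1)); auto; try xx; try congruence.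
      intros [y1 y2]; unfold Xex, c1_adj; cbn [fst snd]; lia.
    + apply (not_freezing B (4,0) (3,1)); auto; try xx; try congruence.
      intros [y1 y2]; unfold Xex, c1_adj; cbn [fst snd]; lia.
    + apply (not_freezing B (4,3) (3,2)); auto; try xx; try congruence.
      intros [y1 y2]; unfold Xex, c1_adj; cbn [fst snd]; lia.
    + apply (not_freezing B (2,3) (3,2)); auto; try xx; try congruence.
      intros [y1 y2]; unfold Xex, c1_adj; cbn [fst snd]; lia.
    + apply (not_freezing B (0,2) (1,1)); auto; try xx; try congruence.
      intros [y1 y2]; unfold Xex, c1_adj; cbn [fst snd]; lia.
Qed.
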